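(* Let $(X,s)$ be a complete strong partial metric space, let $x_o\in X$, and let $f:X\to X$ be a Cauchy function at $x_o$. If $f$ is weakly orbitally continuous at $x_o$, then $f$ has a fixed point.
   Context: A strong partial metric on $X$ is $s:X\times X\to\mathbb{R}$ with, for all $x,y,z$: $s(x,x)<s(x,y)$ whenever $x\neq y$; $s(x,y)=s(y,x)$; $s(x,y)\le s(x,z)+s(z,y)-s(z,z)$. A point $a$ is a limit of $\{x_i\}$ iff for every $\epsilon>0$ there is $N$ with $s(a,x_i)-s(a,a)<\epsilon$ for all $i>N$ (convergence in the topology generated by the balls $\{y\mid s(x,y)-s(x,x)<\epsilon\}$). $\{x_i\}$ is Cauchy with central distance $r$ if for every $\epsilon>0$ there is $N$ with $|s(x_i,x_j)-r|<\epsilon$ for $i\ge j>N$; a special limit is a limit $a$ with $s(a,a)=r$; $(X,s)$ is complete if every Cauchy sequence has a special limit. $f$ is a Cauchy function at $x_o$ if the orbit $\{f^i(x_o)\}$ ($f^0(x_o)=x_o$, $f^{i+1}(x_o)=f(f^i(x_o))$) is Cauchy. $f$ is weakly orbitally continuous at $x_o$ if whenever $a$ is a special limit of $\{f^i(x_o)\}$, $f(a)$ is a limit of $\{f^i(x_o)\}$. *)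

(* Defs.v *)
From Stdlib Require Import Reals.
Open Scope R_scope.

Definition strong_partial_metric {X : Type} (s : X -> X -> R) : Prop :=
  (forall x y : X, x <> y -> s x x < s x y) /\
  (forall x y : X, s x y = s y x) /\
  (forall x y z : X, s x y <= s x z + s z y - s z z).

Definition is_limit {X : Type} (s : X -> X -> R) (u : nat -> X) (a : X) : Prop :=
  forall eps : R, 0 < eps ->
    exists N : nat, forall i : nat, (i > N)%nat -> s a (u i) - s a a < eps.

Definition cauchy_central {X : Type} (s : X -> X -> R) (u : nat -> X) (r : R) : Prop :=
  forall eps : R, 0 < eps ->
    exists N : nat, forall i j : nat, (i >= j)%nat -> (j > N)%nat ->
      Rabs (s (u i) (u j) - r) < eps.

Definition is_cauchy {X : Type} (s : X -> X -> R) (u : nat -> X) : Prop :=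
  exists r : R, cauchy_central s u r.

Definition special_limit {X : Type} (s : X -> X -> R) (u : nat -> X) (a : X) : Prop :=
  exists r : R, cauchy_central s u r /\ is_limit s u a /\ s a a = r.

Definition complete_spm {X : Type} (s : X -> X -> R) : Prop :=
  forall u : nat -> X, is_cauchy s u -> exists a : X, special_limit s u a.

Fixpoint orbit {X : Type} (f : X -> X) (x : X) (i : nat) : X :=
  match i with
  | O => x
  | S k => f (orbit f x k)
  end.

Definition cauchy_function_at {X : Type} (s : X -> X -> R) (f : X -> X) (x0 : X) : Prop :=
  is_cauchy s (orbit f x0).

Definition weakly_orbitally_continuous_at {X : Type} (s : X -> X -> R)
    (f : X -> X) (x0 : X) : Prop :=
  forall a : X, special_limit s (orbit f x0) a -> is_limit s (orbit f x0) (f a).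

(* Main.v *)
Require Import Defs.
From Stdlib Require Import Reals Lra Lia Classical.
Open Scope R_scope.

Theorem theorem7p13 (X : Type) (s : X -> X -> R) (x0 : X) (f : X -> X) :
  strong_partial_metric s ->
  complete_spm s ->
  cauchy_function_at s f x0 ->
  weakly_orbitally_continuous_at s f x0 ->
  exists x : X, f x = x.
Proof.
  intros [Hs1 [Hs2 Hs3]] Hc Hcf Hw.
  destruct (Hc _ Hcf) as [a Ha].
  exists a.
  pose proof (Hw a Ha) as Hfa.
  destruct Ha as [r [Hcc [Hl Haa]]].
  destruct (classic (f a = a)) as [E|NE]; [exact E|exfalso].
  assert (Hlt : s (f a) (f a) < s a (f a)).
  { rewrite (Hs2 a (f a)). apply Hs1. exact NE. }
  set (eps := (s a (f a) - s (f a) (f a)) / 3).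
  assert (Heps : 0 < eps) by (unfold eps; lra).
  destruct (Hl eps Heps) as [N1 H1].
  destruct (Hfa eps Heps) as [N2 H2].
  destruct (Hcc eps Heps) as [N3 H3].
  set (i := (N1 + N2 + N3 + 1)%nat).
  assert (A1 := H1 i ltac:(unfold i; lia)).
  assert (A2 := H2 i ltac:(unfold i; lia)).
  assert (A3 := H3 i i ltac:(lia) ltac:(unfold i; lia)).
  assert (T := Hs3 a (f a) (orbit f x0 i)).
  rewrite (Hs2 (orbit f x0 i) (f a)) in T.
  apply Rabs_def2 in A3. destruct A3.
  unfold eps in *. lra.
Qed.
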